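(* Let $R$ be a QNA with Goodearl–Yakimov elements $y_1,\ldots,y_N$. For all $i,j\in[1,N]$ with $i\neq j$, we have $y_i\notin y_jR$.
   Context: ${\mathbb K}$ is a field of characteristic $0$. A quantum nilpotent algebra (QNA) is an iterated Ore extension $R={\mathbb K}[x_1][x_2;\sigma_2,\delta_2]\cdots[x_N;\sigma_N,\delta_N]$, where $R_k={\mathbb K}[x_1][x_2;\sigma_2,\delta_2]\cdots[x_k;\sigma_k,\delta_k]$ ($R_0={\mathbb K}$), $\sigma_k$ is a ${\mathbb K}$-automorphism and $\delta_k$ a $\sigma_k$-derivation of $R_{k-1}$, together with a torus $\mathcal H$ acting rationally by ${\mathbb K}$-automorphisms on $R$ with each $x_i$ an $\mathcal H$-eigenvector, such that: (i) $\sigma_k(x_j)=\lambda_{kj}x_j$ for $j<k$, with $\lambda_{kj}\in{\mathbb K}^*$; (ii) $\delta_k$ is locally nilpotent on $R_{k-1}$; (iii) for each $k$ there exist $h_k\in\mathcal H$ and $q_k\in{\mathbb K}^*$ not a root of unity such that $h_k$ acts on $R_{k-1}$ as $\sigma_k$ and $h_k\cdot x_k=q_kx_k$. The rank is $n=|\{k:\delta_k=0\}|$ and $\mathcal H=({\mathbb K}^* )^n$ is taken maximal. Homogeneous elements are the $\mathcal H$-eigenvectors. An element $u$ is normal if $uR=Ru$; a prime element is a nonzero normal $p$ with $pR$ a completely prime ideal. Goodearl–Yakimov elements: there is a surjective map $\mu:[1,N]\to[1,n]$ with predecessor $p(k)=\max\{j<k:\mu(j)=\mu(k)\}$ (or $-\infty$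 if none) and successor $s(k)=\min\{j>k:\mu(j)=\mu(k)\}$ (or $+\infty$ if none), and homogeneous elements $y_1,\ldots,y_N\in R$, uniquely determined, with $y_k=x_k$ if $p(k)=-\infty$ and $y_k=y_{p(k)}x_k-c_k$ for some $c_k\in R_{k-1}$ otherwise, such that for every $k$ the set $\{y_j: j\le k,\ s(j)>k\}$ is, up to nonzero scalars, the set of homogeneous prime elements of $R_k$. The $y_i$ pairwise quasi-commute. *)

(* Defs.v *)
From HB Require Import structures.
From mathcomp Require Import all_boot all_order all_algebra.
Set Implicit Arguments. Unset Strict Implicit. Unset Printing Implicit Defensive.
Import Order.TTheory GRing.Theory Num.Theory.
Local Open Scope ring_scope.

(* Indices are 0-based: the generator x_k of the paper (k in [1,N]) is
   [x (k-1)] here, with [x : 'I_N -> R].  [Rsub k] is the paper's R_k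
   (subalgebra spanned by ordered monomials in the first k generators),
   so the paper's R_{k-1} for the generator [x k] (k : 'I_N) is [Rsub k]. *)

Section QNA.
Variables (K : fieldType) (R : algType K) (N : nat) (x : 'I_N -> R).

Definition mono (a : {ffun 'I_N -> nat}) : R := \prod_(i < N) x i ^+ a i.

Definition Rsub (k : nat) (r : R) : Prop :=
  exists s : seq (K * {ffun 'I_N -> nat}),
    (forall p, p \in s -> forall i : 'I_N, (k <= i)%N -> p.2 i = 0%N) /\
    r = \sum_(p <- s) p.1 *: mono p.2.

Definition pbw_basis : Prop :=
  (forall r, Rsub N r) /\
  (forall (s : seq {ffun 'I_N -> nat}) (c : {ffun 'I_N -> nat} -> K),
      uniq s -> \sum_(a <- s) c a *: mono a = 0 ->
      forall a, a \in s -> c a = 0).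

Definition alg_auto_on (S : R -> Prop) (f : R -> R) : Prop :=
  [/\ (forall r, S r -> S (f r)),
      (forall r, S r -> exists r', S r' /\ f r' = r),
      (forall r r', S r -> S r' -> f r = f r' -> r = r') &
      [/\ (forall (a : K) r r', S r -> S r' -> f (a *: r + r') = a *: f r + f r'),
          (forall r r', S r -> S r' -> f (r * r') = f r * f r') & f 1 = 1]].

Definition skew_der_on (S : R -> Prop) (f d : R -> R) : Prop :=
  [/\ (forall r, S r -> S (d r)),
      (forall (a : K) r r', S r -> S r' -> d (a *: r + r') = a *: d r + d r') &
      (forall r r', S r -> S r' -> d (r * r') = f r * d r' + d r * r')].

Definition iterated_ore (sigma delta : 'I_N -> R -> R) : Prop :=
  pbw_basis /\
  forall k : 'I_N,
    [/\ alg_auto_on (Rsub k) (sigma k),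
        skew_der_on (Rsub k) (sigma k) (delta k) &
        forall r, Rsub k r -> x k * r = sigma k r * x k + delta k r].

Section Torus.
Variables (n : nat) (act : ('I_n -> K) -> R -> R).

Definition inH (h : 'I_n -> K) : Prop := forall l, h l != 0.

Definition rchar (m : {ffun 'I_n -> int}) (h : 'I_n -> K) : K :=
  \prod_(l < n) h l ^ m l.

Definition eigenvector (u : R) : Prop :=
  u != 0 /\ forall h, inH h -> exists c : K, act h u = c *: u.

Definition rational_torus_action : Prop :=
  [/\ (forall h, inH h -> alg_auto_on (fun _ => True) (act h)),
      (forall r, act (fun _ => 1) r = r),
      (forall h h' r, inH h -> inH h' ->
          act (fun l => h l * h' l) r = act h (act h' r)) &
      (forall r, exists s : seq (R * {ffun 'I_n -> int}),
          r = \sum_(p <- s) p.1 /\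
          forall p, p \in s -> forall h, inH h -> act h p.1 = rchar p.2 h *: p.1)].

Definition not_root_of_unity (q : K) : Prop := forall m, (0 < m)%N -> q ^+ m != 1.

Definition rank_is (delta : 'I_N -> R -> R) : Prop :=
  exists D : {set 'I_N},
    (forall k, k \in D <-> forall r, Rsub k r -> delta k r = 0) /\ #|D| = n.

Definition is_QNA (sigma delta : 'I_N -> R -> R) : Prop :=
  [/\ iterated_ore sigma delta,
      rational_torus_action,
      (forall i, eigenvector (x i)),
      rank_is delta &
    [/\
      (forall k j : 'I_N, (j < k)%N ->
          exists lam : K, lam != 0 /\ sigma k (x j) = lam *: x j),
      (forall (k : 'I_N) r, Rsub k r -> exists m, iter m (delta k) r = 0) &
      (forall k : 'I_N, exists h, inH h /\
          (forall r, Rsub k r -> act h r = sigma k r) /\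
          exists q : K, q != 0 /\ not_root_of_unity q /\ act h (x k) = q *: x k)]].

Definition homogeneous (u : R) : Prop := eigenvector u.

Definition normal_in (S : R -> Prop) (u : R) : Prop :=
  forall r, S r ->
    (exists r', S r' /\ u * r = r' * u) /\ (exists r', S r' /\ r * u = u * r').

Definition in_rideal (S : R -> Prop) (u z : R) : Prop := exists r, S r /\ z = u * r.

Definition prime_in (S : R -> Prop) (u : R) : Prop :=
  [/\ S u, u != 0, normal_in S u, ~ in_rideal S u 1 &
      forall a b, S a -> S b -> in_rideal S u (a * b) ->
        in_rideal S u a \/ in_rideal S u b].

Definition is_pred (mu : 'I_N -> 'I_n) (k j : 'I_N) : Prop :=
  [/\ (j < k)%N, mu j = mu k &
      forall j' : 'I_N, (j < j')%N -> (j' < k)%N -> mu j' <> mu k].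

(* j <= k (1-based) and s(j) > k, for the paper's R_k = Rsub k *)
Definition alive (mu : 'I_N -> 'I_n) (k : nat) (j : 'I_N) : Prop :=
  (j < k)%N /\ forall j' : 'I_N, (j < j')%N -> (j' < k)%N -> mu j' <> mu j.

Definition GY_elements (mu : 'I_N -> 'I_n) (y : 'I_N -> R) : Prop :=
  [/\ (forall l : 'I_n, exists k, mu k = l),
      (forall k, homogeneous (y k)),
      (forall k : 'I_N, (forall j : 'I_N, (j < k)%N -> mu j <> mu k) -> y k = x k),
      (forall k j : 'I_N, is_pred mu k j ->
          exists c, Rsub k c /\ y k = y j * x k - c) &
      (forall k : nat, (1 <= k <= N)%N ->
         (forall j, alive mu k j -> prime_in (Rsub k) (y j)) /\
         (forall u, homogeneous u -> prime_in (Rsub k) u ->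
            exists j (c : K), [/\ alive mu k j, c != 0 & u = c *: y j]))].

End Torus.
End QNA.

(* Main.v *)
Require Import Defs.
From HB Require Import structures.
From mathcomp Require Import all_boot all_order all_algebra.
From Stdlib Require Import IndefiniteDescription.
Import GRing.Theory.
Local Open Scope ring_scope.
Set Implicit Arguments. Unset Strict Implicit. Unset Printing Implicit Defensive.
Section Basic.
Variables (K : fieldType) (R : algType K) (N : nat) (x : 'I_N -> R).
Local Notation S := (Rsub x).

Lemma S0 k : S k 0.
Proof. by exists [::]; split => //; rewrite big_nil. Qed.

Lemma SD k a b : S k a -> S k b -> S k (a + b).
Proof.
move=> [s1 [H1 ->]] [s2 [H2 ->]]; exists (s1 ++ s2); split; last by rewrite big_cat.
by move=> p; rewrite mem_cat => /orP[/H1|/H2].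
Qed.

Lemma SZ k (c : K) a : S k a -> S k (c *: a).
Proof.
move=> [s [H ->]]; exists [seq (c * p.1, p.2) | p <- s]; split.
  by move=> p /mapP[q /H Hq ->].
by rewrite big_map scaler_sumr; apply: eq_bigr => p _; rewrite scalerA.
Qed.

Lemma SN k a : S k a -> S k (- a).
Proof. by move=> Ha; rewrite -scaleN1r; apply: SZ. Qed.

Lemma SB k a b : S k a -> S k b -> S k (a - b).
Proof. by move=> Ha Hb; apply: SD => //; apply: SN. Qed.

Lemma mono0 : mono x [ffun=> 0%N] = 1.
Proof. by rewrite /mono big1 // => i _; rewrite ffunE expr0. Qed.

Lemma S1 k : S k 1.
Proof.
exists [:: (1, [ffun=> 0%N])]; split.
  by move=> p; rewrite inE => /eqP -> i _; rewrite ffunE.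
by rewrite big_seq1 /= mono0 scale1r.
Qed.

Lemma Smono k k' a : S k a -> (k <= k')%N -> S k' a.
Proof.
move=> [s [H ->]] kk; exists s; split => // p ps i ki.
by apply: H => //; apply: leq_trans ki.
Qed.

Lemma S_sum k (I : Type) (r : seq I) (F : I -> R) :
  (forall i, S k (F i)) -> S k (\sum_(i <- r) F i).
Proof.
move=> HF; elim: r => [|i r IH]; first by rewrite big_nil; apply: S0.
by rewrite big_cons; apply: SD.
Qed.

Definition shift (k : 'I_N) (e : nat) (b : {ffun 'I_N -> nat}) : {ffun 'I_N -> nat} :=
  [ffun i => if i == k then e else b i].

Lemma prod_split (k : 'I_N) (F G : 'I_N -> R) (c : R) :
  (forall i : 'I_N, (i < k)%N -> G i = F i) ->
  (forall i : 'I_N, (k <= i)%N -> F i = 1) ->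
  G k = c -> (forall i : 'I_N, (k < i)%N -> G i = 1) ->
  \prod_(i < N) G i = (\prod_(i < N) F i) * c.
Proof.
case: N x k F G => [|M] _ k; first by case: k.
move=> F G HGF HF HGk HG.
have E (H : 'I_M.+1 -> R) : \prod_(i < M.+1) H i = \prod_(0 <= i < M.+1) H (inord i).
  by rewrite big_mkord; apply: eq_bigr => i _; rewrite inord_val.
have kM : (k <= M.+1)%N by apply: ltnW.
rewrite !E !(@big_cat_nat _ _ _ k 0 M.+1 _ _ (leq0n k) kM).
have ->: \prod_(0 <= i < k) G (inord i) = \prod_(0 <= i < k) F (inord i).
  rewrite !big_seq; apply: eq_bigr => i; rewrite mem_index_iota => /andP[_ ik].
  by apply: HGF; rewrite inordK // (ltn_trans ik).
have ->: \prod_(k <= i < M.+1) F (inord i) = 1.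
  rewrite big_seq big1 // => i; rewrite mem_index_iota => /andP[ki iM].
  by apply: HF; rewrite inordK.
rewrite /= mulr1.
congr (_ * _).
rewrite big_ltn // inord_val HGk big_seq big1 ?mulr1 // => i.
rewrite mem_index_iota => /andP[ki iM]; apply: HG; rewrite inordK //.
Qed.

Lemma mono_shift (k : 'I_N) e (b : {ffun 'I_N -> nat}) :
  (forall i : 'I_N, (k <= i)%N -> b i = 0%N) ->
  mono x (shift k e b) = mono x b * x k ^+ e.
Proof.
move=> Hb; rewrite /mono; apply: (@prod_split k).
- by move=> i ik; rewrite ffunE; case: eqP => // E; move: ik; rewrite E ltnn.
- by move=> i ki; rewrite Hb // expr0.
- by rewrite ffunE eqxx.
- move=> i ki; rewrite ffunE; case: eqP => [E|_]; first by rewrite E ltnn in ki.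
  by rewrite Hb ?expr0 // ltnW.
Qed.

End Basic.
Section Regroup.
Variables (K : fieldType) (R : algType K) (A : eqType) (F : A -> R).

Lemma regroup (s : seq (K * A)) :
  \sum_(p <- s) p.1 *: F p.2 =
  \sum_(a <- undup (map snd s)) (\sum_(p <- s | p.2 == a) p.1) *: F a.
Proof.
have E : forall a, (\sum_(p <- s | p.2 == a) p.1) *: F a =
   \sum_(p <- s) (if p.2 == a then p.1 *: F p.2 else 0).
  move=> a; rewrite scaler_suml big_mkcond; apply: eq_bigr => p _.
  by case: eqP => [->|_] //; rewrite scale0r.
under [RHS]eq_bigr => a _ do rewrite E.
rewrite exchange_big /= [LHS]big_seq [RHS]big_seq; apply: eq_bigr => p ps.
have Hp : p.2 \in undup (map snd s).
  by rewrite mem_undup; apply: map_f.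
rewrite (bigD1_seq p.2) ?undup_uniq //= eqxx big1 ?addr0 // => a /negbTE.
by rewrite eq_sym => ->.
Qed.
End Regroup.

Section Indep.
Variables (K : fieldType) (R : algType K) (N : nat) (x : 'I_N -> R).
Hypothesis pbw : pbw_basis x.

Lemma coef_zero (s : seq (K * {ffun 'I_N -> nat})) :
  \sum_(p <- s) p.1 *: mono x p.2 = 0 ->
  forall a, \sum_(p <- s | p.2 == a) p.1 = 0.
Proof.
rewrite regroup => H0 a.
case: (boolP (a \in undup (map snd s))) => Ha.
  exact: (pbw.2 _ (fun a => \sum_(p <- s | p.2 == a) p.1) (undup_uniq _) H0 a Ha).
rewrite big_seq_cond big_pred0 // => p; apply/negbTE/andP => -[ps /eqP pa].
by move: Ha; rewrite mem_undup -pa map_f.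
Qed.

Lemma indep (k : 'I_N) D (c : nat -> R) :
  (forall e, Rsub x k (c e)) -> \sum_(e < D) c e * x k ^+ e = 0 ->
  forall e, (e < D)%N -> c e = 0.
Proof.
move=> Hc.
have [s Hs] : {s : nat -> seq (K * {ffun 'I_N -> nat}) |
   forall e, (forall p, p \in s e -> forall i : 'I_N, (k <= i)%N -> p.2 i = 0%N) /\
     c e = \sum_(p <- s e) p.1 *: mono x p.2}.
  exists (fun e => proj1_sig (constructive_indefinite_description _ (Hc e))).
  by move=> e; case: (constructive_indefinite_description _ (Hc e)).
move=> H0 e eD.
pose L := flatten [seq [seq (p.1, shift k e' p.2) | p <- s e'] | e' <- iota 0 D].
have EL : \sum_(q <- L) q.1 *: mono x q.2 = 0.
  rewrite -[RHS]H0 /L big_flatten big_map -(big_mkord xpredT (fun e => c e * x k ^+ e)).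
  rewrite /index_iota subn0; apply: eq_bigr => e' _; rewrite big_map (proj2 (Hs e')) mulr_suml.
  rewrite big_seq [RHS]big_seq; apply: eq_bigr => p ps /=.
  by rewrite mono_shift ?scalerAl // => i ki; apply: (proj1 (Hs e')).
have Hb : forall b : {ffun 'I_N -> nat}, b \in map snd (s e) ->
    \sum_(p <- s e | p.2 == b) p.1 = 0.
  move=> b /mapP[p0 p0s ->].
  have := coef_zero EL (shift k e p0.2); rewrite /L.
  rewrite big_flatten big_map (bigD1_seq e) ?iota_uniq ?mem_iota //=.
  rewrite [X in _ + X]big1 ?addr0; last first.
    move=> e' ne'; rewrite big_map big_pred0 // => p /=.
    apply/negbTE/eqP => /(congr1 (fun f : {ffun _ -> _} => f k)).
    by rewrite !ffunE eqxx => E; rewrite E eqxx in ne'.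
  rewrite big_map => H; rewrite -[RHS]H big_seq_cond [RHS]big_seq_cond.
  apply: eq_bigl => p /=; case: (boolP (p \in s e)) => //= ps.
  apply/eqP/eqP => [->//|E]; apply/ffunP => i.
  move: E => /(congr1 (fun f : {ffun _ -> _} => f i)); rewrite !ffunE.
  case: eqP => [-> _|//].
  by rewrite (proj1 (Hs e) p ps) ?leqnn // (proj1 (Hs e) p0 p0s) ?leqnn.
rewrite (proj2 (Hs e)) regroup big_seq big1 // => b.
by rewrite mem_undup => /Hb ->; rewrite scale0r.
Qed.
End Indep.
Section Level.
Variables (K : fieldType) (R : algType K) (N : nat) (x : 'I_N -> R).
Variables (s d : R -> R) (k : 'I_N).
Local Notation S := (Rsub x k).
Local Notation X := (x k).

Definition inF D (w : R) := exists c : nat -> R, (forall e, S (c e)) /\ w = \sum_(e < D) c e * X ^+ e.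

Lemma F0 D : inF D 0.
Proof. exists (fun _ => 0); split => [e|]; first exact: S0.
by rewrite big1 // => e _; rewrite mul0r. Qed.

Lemma FD D a b : inF D a -> inF D b -> inF D (a + b).
Proof.
move=> [ca [Ha ->]] [cb [Hb ->]]; exists (fun e => ca e + cb e); split.
  by move=> e; apply: SD.
by rewrite -big_split; apply: eq_bigr => e _; rewrite mulrDl.
Qed.

Lemma FN D a : inF D a -> inF D (- a).
Proof.
move=> [ca [Ha ->]]; exists (fun e => - ca e); split; first by move=> e; apply: SN.
by rewrite -sumrN; apply: eq_bigr => e _; rewrite mulNr.
Qed.

Lemma Fsum D D' (F : 'I_D -> R) : (forall e, inF D' (F e)) -> inF D' (\sum_(e < D) F e).
Proof. by move=> H; apply: (big_ind (inF D')) => //; [apply: F0 | apply: FD]. Qed.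

Lemma Fmon D c e : S c -> (e < D)%N -> inF D (c * X ^+ e).
Proof.
move=> Sc eD; exists (fun i => if i == e then c else 0); split.
  by move=> i; case: eqP => _ //; apply: S0.
rewrite (bigD1 (Ordinal eD)) //= eqxx big1 ?addr0 // => i.
by rewrite -val_eqE /= => /negbTE ->; rewrite mul0r.
Qed.

Lemma Fle D D' a : (D <= D')%N -> inF D a -> inF D' a.
Proof.
move=> DD [c [Hc ->]]; apply: Fsum => e; apply: Fmon => //.
exact: leq_trans (ltn_ord e) DD.
Qed.

Lemma FS a : S a -> inF 1 a.
Proof. by move=> Sa; rewrite -[a]mulr1 -(expr0 X); apply: Fmon. Qed.

Lemma F1S a : inF 1 a -> S a.
Proof. by move=> [c [Hc ->]]; rewrite big_ord1 expr0 mulr1. Qed.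

Lemma F0eq a : inF 0 a -> a = 0.
Proof. by move=> [c [Hc ->]]; rewrite big_ord0. Qed.

Hypothesis HmulS : forall a b, S a -> S b -> S (a * b).
Hypothesis Hsig : alg_auto_on S s.
Hypothesis Hdel : skew_der_on S s d.
Hypothesis Hore : forall r, S r -> X * r = s r * X + d r.

Lemma Flmul D u w : S u -> inF D w -> inF D (u * w).
Proof.
move=> Su [c [Hc ->]]; rewrite mulr_sumr; apply: Fsum => e.
by rewrite mulrA; apply: Fmon => //; apply: HmulS.
Qed.

Lemma Frx D f w : inF D w -> inF (D + f) (w * X ^+ f).
Proof.
move=> [c [Hc ->]]; rewrite mulr_suml; apply: Fsum => e.
by rewrite -mulrA -exprD; apply: Fmon => //; rewrite ltn_add2r.
Qed.

Lemma Fxl D w : inF D w -> inF (D + 1) (X * w).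
Proof.
move=> [c [Hc ->]]; rewrite mulr_sumr; apply: Fsum => e.
have [Hs1 _ _ _] := Hsig; have [Hd1 _ _] := Hdel.
rewrite mulrA Hore // mulrDl; apply: FD.
  by rewrite -mulrA -exprS; apply: Fmon; [apply: Hs1 | rewrite addn1 ltnS].
by apply: Fmon; [apply: Hd1 | rewrite addn1 ltnS ltnW].
Qed.

Lemma Fxel D e w : inF D w -> inF (D + e) (X ^+ e * w).
Proof.
move=> Hw; elim: e => [|e IH]; first by rewrite addn0 expr0 mul1r.
by rewrite exprS -mulrA addnS -addn1; apply: Fxl.
Qed.

Lemma Fmul p q a b : inF p a -> inF q.+1 b -> inF (p + q) (a * b).
Proof.
move=> [c [Hc ->]] Hb; rewrite mulr_suml; apply: Fsum => e.
rewrite -mulrA; apply: Flmul => //; apply: (Fle _ (Fxel e Hb)).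
by rewrite addSn addnC -addSn leq_add2r.
Qed.

Lemma s0 : s 0 = 0.
Proof.
have [_ _ _ [Hl _ _]] := Hsig.
have := Hl 1 0 0 (S0 _ _) (S0 _ _); rewrite !scale1r !addr0 => E.
by apply: (addrI (s 0)); rewrite -E addr0.
Qed.

Lemma iterS e b : S b -> S (iter e s b).
Proof. by have [Hs1 _ _ _] := Hsig; move=> Sb; elim: e => //= e IH; apply: Hs1. Qed.

Lemma iter_neq0 e b : S b -> b != 0 -> iter e s b != 0.
Proof.
have [_ _ Hinj _] := Hsig; move=> Sb nb; elim: e => //= e IH.
apply/eqP => E; move/eqP: IH; apply; apply: Hinj; first exact: iterS.
  exact: S0.
by rewrite E s0.
Qed.

Lemma lead_x D b : S b -> exists w, inF D w /\ X ^+ D * b = iter D s b * X ^+ D + w.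
Proof.
have [Hs1 _ _ _] := Hsig; have [Hd1 _ _] := Hdel.
move=> Sb; elim: D => [|D [w [Hw E]]].
  by exists 0; split; [apply: F0 | rewrite !expr0 mulr1 mul1r addr0].
exists (d (iter D s b) * X ^+ D + X * w); split.
  apply: FD; first by apply: Fmon; [apply: Hd1; apply: iterS | rewrite ltnS].
  by rewrite -addn1; apply: Fxl.
rewrite exprS -mulrA E mulrDr mulrA Hore; last exact: iterS.
by rewrite mulrDl -mulrA -exprS addrA.
Qed.

Definition hasDeg (u : R) D := exists al a', [/\ S al, al != 0, inF D a' & u = a' + al * X ^+ D].

Hypothesis pbw : pbw_basis x.

Lemma noF u D : hasDeg u D -> ~ inF D u.
Proof.
move=> [al [a' [Sal nal [c' [Hc' Ea']] Eu]]] [c [Hc Ec]].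
pose c'' e := if (e < D)%N then c e - c' e else - al.
have H0 : \sum_(e < D.+1) c'' e * X ^+ e = 0.
  rewrite big_ord_recr /= /c'' ltnn.
  have -> : \sum_(i < D) (if (i < D)%N then c i - c' i else - al) * X ^+ i =
            \sum_(i < D) c i * X ^+ i - \sum_(i < D) c' i * X ^+ i.
    rewrite -sumrB; apply: eq_bigr => i _; by rewrite ltn_ord mulrBl.
  by rewrite -Ec -Ea' Eu mulNr (addrC a') addrK subrr.
have Hc'' : forall e, S (c'' e).
  by move=> e; rewrite /c''; case: ifP => _; [apply: SB | apply: SN].
have := indep pbw (k := k) (D := D.+1) (c := c'') Hc'' H0 (ltnSn D).
by rewrite /c'' ltnn => H; move/eqP: nal; apply; rewrite -[al]opprK H oppr0.
Qed.

Lemma deg_ex D u : inF D u -> u != 0 -> exists e, hasDeg u e.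
Proof.
elim: D u => [|D IH] u Hu nu; first by move: nu; rewrite (F0eq Hu) eqxx.
move: Hu => [c [Hc Eu]]; move: Eu; rewrite big_ord_recr /= => Eu.
case: (eqVneq (c D) 0) => cD.
  apply: IH nu; exists c; split => //; by rewrite Eu cD mul0r addr0.
by exists D, (c D), (\sum_(i < D) c i * X ^+ i); split => //; exists c.
Qed.

Hypothesis HdomS : forall a b, S a -> S b -> a * b = 0 -> a = 0 \/ b = 0.

Lemma deg_mul a b p q : hasDeg a p -> hasDeg b q -> hasDeg (a * b) (p + q).
Proof.
move=> [al [a' [Sal nal Ha' ->]]] [be [b' [Sbe nbe Hb' ->]]].
have [w [Hw Ew]] := lead_x p Sbe.
exists (al * iter p s be), (a' * b' + a' * (be * X ^+ q) + al * (X ^+ p * b') + al * w * X ^+ q).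
split.
- by apply: HmulS => //; apply: iterS.
- apply/eqP => /HdomS [] //; first exact: iterS.
    by move/eqP: nal.
  by move/eqP: (iter_neq0 p Sbe nbe).
- apply: FD; last by apply: Frx; apply: Flmul.
  apply: FD; last by rewrite addnC; apply: Flmul => //; apply: Fxel.
  apply: FD; first by apply: Fmul Ha' (Fle _ Hb').
  by apply: Fmul Ha' (Fmon _ _).
- rewrite mulrDl !mulrDr -!addrA; congr (_ + (_ + _)).
  rewrite -mulrA; congr (_ + _).
  by rewrite -!mulrA (mulrA (X ^+ p)) Ew mulrDl mulrDr addrC exprD !mulrA.
Qed.

Lemma deg0 u : hasDeg u 0 -> S u.
Proof. by move=> [al [a' [Sal _ Ha' ->]]]; rewrite (F0eq Ha') add0r expr0 mulr1. Qed.

Lemma S_Xe c e : S c -> Rsub x k.+1 (c * X ^+ e).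
Proof.
move=> [sq [Hs ->]]; rewrite mulr_suml big_seq.
apply: (big_ind (Rsub x k.+1)); [exact: S0 | exact: SD |] => p ps.
rewrite -scalerAl -mono_shift; last exact: Hs.
exists [:: (p.1, shift k e p.2)]; split; last by rewrite big_seq1.
move=> q; rewrite inE => /eqP -> i ki /=; rewrite ffunE.
case: eqP => [E|_]; first by move: ki; rewrite E ltnn.
by apply: Hs => //; apply: ltnW.
Qed.

Lemma FtoS D u : inF D u -> Rsub x k.+1 u.
Proof.
move=> [c [Hc ->]]; apply: (big_ind (Rsub x k.+1)); [exact: S0 | exact: SD |].
by move=> e _; apply: S_Xe.
Qed.

Lemma StoF u : Rsub x k.+1 u -> exists D, inF D u.
Proof.
move=> [sq [Hs ->]]; elim: sq Hs => [|p sq IH] Hs.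
  by exists 0%N; rewrite big_nil; apply: F0.
have [D HD] : exists D, inF D (\sum_(q <- sq) q.1 *: mono x q.2).
  by apply: IH => q qs; apply: Hs; rewrite inE qs orbT.
have Hp := Hs p (mem_head _ _).
exists (maxn D (p.2 k).+1); rewrite big_cons addrC; apply: FD.
  by apply: Fle HD; apply: leq_maxl.
have -> : mono x p.2 = mono x (shift k 0 p.2) * X ^+ (p.2 k).
  have {1}-> : p.2 = shift k (p.2 k) (shift k 0 p.2).
    by apply/ffunP => i; rewrite !ffunE; case: eqP => // ->.
  rewrite mono_shift //.
  move=> i ki; rewrite ffunE; case: eqP => // ne; apply: Hp.
  rewrite ltn_neqAle ki andbT; apply/eqP => E; apply: ne; apply: val_inj => /=.
  by rewrite E.
rewrite scalerAl; apply: Fmon; last by rewrite leq_max ltnSn orbT.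
apply: SZ; exists [:: (1, shift k 0 p.2)]; split; last by rewrite big_seq1 scale1r.
move=> q; rewrite inE => /eqP -> i ki /=; rewrite ffunE; case: eqP => // ne.
apply: Hp; rewrite ltn_neqAle ki andbT; apply/eqP => E; apply: ne; apply: val_inj => /=.
by rewrite E.
Qed.

Lemma mul_step a b : Rsub x k.+1 a -> Rsub x k.+1 b -> Rsub x k.+1 (a * b).
Proof.
move=> /StoF [p Ha] /StoF [q Hb]; apply: (@FtoS (p + q)).
by apply: Fmul Ha (Fle _ Hb).
Qed.

Lemma hasDeg_ex u : Rsub x k.+1 u -> u != 0 -> exists e, hasDeg u e.
Proof. by move=> /StoF [D HD]; apply: deg_ex HD. Qed.

Lemma dom_step a b : Rsub x k.+1 a -> Rsub x k.+1 b -> a * b = 0 -> a = 0 \/ b = 0.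
Proof.
move=> Sa Sb ab0; case: (eqVneq a 0) => [->|na]; first by left.
case: (eqVneq b 0) => [->|nb]; first by right.
have [p Hp] := hasDeg_ex Sa na; have [q Hq] := hasDeg_ex Sb nb.
by case: (noF (deg_mul Hp Hq)); rewrite ab0; apply: F0.
Qed.

Lemma lowprod a b : Rsub x k.+1 a -> Rsub x k.+1 b -> a != 0 -> b != 0 ->
  S (a * b) -> S a /\ S b.
Proof.
move=> Sa Sb na nb Sab.
have [p Hp] := hasDeg_ex Sa na; have [q Hq] := hasDeg_ex Sb nb.
have Hpq := deg_mul Hp Hq.
case: p q Hp Hq Hpq => [|p] [|q] Hp Hq Hpq; first by split; apply: deg0.
all: by case: (noF Hpq); apply: Fle (FS Sab); rewrite ?addn0 ?addnS.
Qed.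

End Level.
Section Main.
Variables (K : fieldType) (R : algType K) (N : nat) (x : 'I_N -> R).
Variables (sigma delta : 'I_N -> R -> R).
Hypothesis Hit : iterated_ore x sigma delta.
Local Notation S := (Rsub x).

Lemma S0_char a : S 0 a -> exists c : K, a = c *: 1.
Proof.
move=> [s [Hs ->]]; exists (\sum_(p <- s) p.1); rewrite scaler_suml big_seq [RHS]big_seq.
apply: eq_bigr => p ps; congr (_ *: _); rewrite /mono big1 // => i _.
by rewrite (Hs p ps i (leq0n _)) expr0.
Qed.

Lemma levels j : (j <= N)%N ->
  (forall a b, S j a -> S j b -> S j (a * b)) /\
  (forall a b, S j a -> S j b -> a * b = 0 -> a = 0 \/ b = 0).
Proof.
elim: j => [_|j IH jN].
  split=> a b /S0_char [c ->] /S0_char [c' ->].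
    by rewrite -scalerAl mul1r scalerA; apply: SZ; apply: S1.
  rewrite -scalerAl mul1r scalerA => /eqP; rewrite scaler_eq0 oner_eq0 orbF mulf_eq0.
  by case/orP => /eqP ->; [left | right]; rewrite scale0r.
have [Hm Hd] := IH (ltnW jN).
pose k := Ordinal jN.
have [pbw Hk] := Hit; have [Hs Hde Ho] := Hk k.
split=> a b.
  exact: (@mul_step _ _ _ x (sigma k) (delta k) k Hm Hs Hde Ho).
exact: (@dom_step _ _ _ x (sigma k) (delta k) k Hm Hs Hde Ho pbw Hd).
Qed.

Lemma lowprodN (k : 'I_N) a b : S k.+1 a -> S k.+1 b -> a != 0 -> b != 0 ->
  S k (a * b) -> S k a /\ S k b.
Proof.
have [Hm Hd] := levels (ltnW (ltn_ord k)).
have [pbw Hk] := Hit; have [Hs Hde Ho] := Hk k.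
exact: (@lowprod _ _ _ x (sigma k) (delta k) k Hm Hs Hde Ho pbw Hd).
Qed.

Lemma cancelS m a r : (m <= N)%N -> S m a -> a != 0 -> S m (a * r) -> S m r.
Proof.
move=> mN Sa na Sar.
have [pbw _] := Hit.
suff H : forall t, (m + t <= N)%N -> S (m + t) r -> S m r.
  by apply: (H (N - m)%N); rewrite subnKC // ; apply: pbw.1.
elim=> [|t IH] mt; first by rewrite addn0.
move=> St; apply: IH; first by apply: ltnW; rewrite -addnS.
have kN : (m + t < N)%N by rewrite -addnS.
case: (eqVneq r 0) => [->|nr]; first exact: S0.
have := @lowprodN (Ordinal kN) a r; rewrite /= -addnS => H.
apply: (proj2 (H _ St na nr _)).
  by apply: Smono Sa _; rewrite leq_addr.
by apply: Smono Sar _; rewrite leq_addr.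
Qed.

End Main.
Unset Implicit Arguments.
Theorem lemma3p4 (K : fieldType) (R : algType K) (N : nat) (x : 'I_N -> R)
    (sigma delta : 'I_N -> R -> R) (n : nat) (act : ('I_n -> K) -> R -> R)
    (mu : 'I_N -> 'I_n) (y : 'I_N -> R) :
  [pchar K] =i pred0 ->
  is_QNA x act sigma delta ->
  GY_elements x act mu y ->
  forall i j : 'I_N, i != j -> ~ (exists r : R, y i = y j * r).
Proof.
move=> _ [Hit _ _ _ _] [_ _ Hnop Hpred Hprime].
have [pbw Hk] := Hit.
have Yp : forall k : 'I_N, prime_in (Rsub x k.+1) (y k).
  move=> k; have kN : (1 <= k.+1 <= N)%N by rewrite ltn_ord.
  apply: (proj1 (Hprime _ kN)); split => // j' kj' j'k.
  by move: kj'; rewrite ltnNge -ltnS j'k.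
have ynot : forall k : 'I_N, ~ Rsub x k (y k).
  move=> k Sk.
  have [Hm Hd] := levels Hit (ltnW (ltn_ord k)).
  have [Hs Hde Ho] := Hk k.
  have Hdeg : hasDeg x k (y k) 1.
    case: (boolP [exists j : 'I_N, (j < k)%N && (mu j == mu k)]).
      move=> /existsP [j0 Pj0].
      case: (@arg_maxnP _ j0 (fun j : 'I_N => (j < k)%N && (mu j == mu k)) id Pj0).
      move=> p /andP [pk /eqP mup] Hmax.
      have Hp : is_pred mu k p.
        split => // j' pj' j'k muj'; have := Hmax j'; rewrite j'k muj' eqxx /= => /(_ isT).
        by rewrite leqNgt pj'.
      have [c [Sc Ey]] := Hpred k p Hp.
      have [Syp nyp _ _ _] := Yp p.
      exists (y p), (- c); split => //.
      - by apply: Smono Syp _.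
      - exact: FS (SN Sc).
      - by rewrite Ey expr1 addrC.
    rewrite negb_exists => /forallP Hno.
    rewrite Hnop; last first.
      by move=> j jk E; have := Hno j; rewrite jk E eqxx.
    exists 1, 0; split; first exact: S1.
    - exact: oner_neq0.
    - exact: F0.
    - by rewrite add0r mul1r expr1.
  by apply: (noF pbw Hdeg); apply: FS.
move=> i j ij [r Er].
have [Syi nyi Nyi _ Pyi] := Yp i.
have [Syj nyj Nyj Uyj _] := Yp j.
have Sall : forall t, Rsub x N t by move=> t; apply: pbw.1.
have nr : r != 0 by apply/eqP => r0; move: nyi; rewrite Er r0 mulr0 eqxx.
case: (ltngtP i j) => [lij|lji|eij]; last by move: ij; rewrite -val_eqE /= eij eqxx.
- have Sr : Rsub x j.+1 r.
    apply: (cancelS Hit (ltn_ord j) Syj nyj); rewrite -Er.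
    by apply: Smono Syi _; apply: ltnW.
  have := lowprodN Hit Syj Sr nyj nr; rewrite -Er => /(_ (Smono Syi lij)) [].
  by move=> /ynot.
- have Sr : Rsub x i.+1 r.
    apply: (cancelS Hit (ltn_ord i) (Smono Syj (leqW lji)) nyj); rewrite -Er //.
  have [Sj' Sr'] : Rsub x i.+1 (y j) /\ Rsub x i.+1 r by split => //; apply: Smono Syj (leqW lji).
  case: (Pyi _ _ Sj' Sr).
  + by exists 1; split; [apply: S1 | rewrite mulr1].
  + move=> [t [St Et]].
    have nt : t != 0 by apply/eqP => t0; move: nyj; rewrite Et t0 mulr0 eqxx.
    have := lowprodN Hit Syi St nyi nt; rewrite -Et => /(_ (Smono Syj lji)) [].
    by move=> /ynot.
  + move=> [t [St Et]].
    have [[t' [St' Et']] _] := Nyi t St.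
    have [Hm Hd] := levels Hit (ltn_ord i).
    have E0 : (1 - y j * t') * y i = 0.
      by rewrite mulrBl mul1r -mulrA -Et' -Et -Er subrr.
    case: (Hd _ _ (SB (S1 _ _) (Hm _ _ Sj' St')) Syi E0) => [/eqP|/eqP]; last first.
      by rewrite (negbTE nyi).
    rewrite subr_eq0 => /eqP E1.
    apply: Uyj; exists t'; split => //.
    apply: (cancelS Hit (ltn_ord j) Syj nyj); rewrite -E1; exact: S1.
Qed.
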